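(* The functor $\mathrm K\colon\mathbf{Set}\to\mathbf{Sgp}_{\mathbb C^\theta}$ defined by $\mathrm K(X)=((\mathrm L^+(X),\mu_X),\Delta_X)$ and $\mathrm K(f)=\mathrm L^+(f)$ is not an equivalence of categories.
   Context: For a set $X$, $\mathrm L^+(X)=\coprod_{n>0}X^n$ is the set of non-empty lists $[x_1,\dots,x_n]$; $\mathrm L^+(f)[x_1,\dots,x_n]=[f(x_1),\dots,f(x_n)]$. $\mu_X\colon\mathrm L^+(\mathrm L^+(X))\to\mathrm L^+(X)$ is concatenation, so $(\mathrm L^+(X),\mu_X)$ is the free semigroup on $X$ (product = concatenation). $\Delta_X[x_1,\dots,x_n]=[[x_1,\dots,x_n],[x_2,\dots,x_n],\dots,[x_n]]$ and $\varepsilon_X[x_1,\dots,x_n]=x_1$. $\mathbf{Sgp}$ is the category of semigroups. $\mathbb C^\theta$ is the comonad on $\mathbf{Sgp}$ sending a semigroup $(X,\cdot)$ to the set $\mathrm L^+(X)$ with the semigroup product $[x_1,\dots,x_n]\ast[y_1,\dots,y_m]=[x_1y_1,x_2y_1,\dots,x_ny_1,y_1,y_2,\dots,y_m]$, acting on morphisms by $\mathrm L^+$, with comultiplication $\Delta_X$ and counit $\varepsilon_X$. $\mathbf{Sgp}_{\mathbb C^\theta}$ is the category of $\mathbb C^\theta$-coalgebras: semigroups $Y$ with a semigroup morphism $\delta\colon Y\to\mathrm C^\theta(Y)$ satisfying $\Delta_Y\delta=\mathrm L^+(\delta)\delta$ and $\varepsilon_Y\delta=\mathrm{id}_Y$,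 with morphisms the semigroup morphisms commuting with the coactions. (For each set $X$, $\Delta_X$ is a semigroup morphism from $(\mathrm L^+(X),\mu_X)$ to $\mathrm C^\theta(\mathrm L^+(X),\mu_X)$, so $\mathrm K$ is well defined.) *)

(* Defs.v *)
From Stdlib Require Import List.
Import ListNotations.
Set Implicit Arguments.

(** L^+(X): the non-empty list [x1; ...; xn] is represented as (x1, [x2;...;xn]). *)
Definition Lp (X : Type) : Type := (X * list X)%type.

Definition Lmap {X Y : Type} (f : X -> Y) (w : Lp X) : Lp Y :=
  (f (fst w), map f (snd w)).

Definition Lcat {X : Type} (u v : Lp X) : Lp X :=
  (fst u, snd u ++ fst v :: snd v).

Fixpoint suffixes {X : Type} (l : list X) : list (Lp X) :=
  match l with
  | [] => []
  | y :: l' => (y, l') :: suffixes l'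
  end.

(** Delta_X [x1..xn] = [[x1..xn],[x2..xn],...,[xn]] *)
Definition Ldelta {X : Type} (w : Lp X) : Lp (Lp X) := (w, suffixes (snd w)).

Definition Leps {X : Type} (w : Lp X) : X := fst w.

(** The product of C^theta(X,.) :
    [x1..xn] * [y1..ym] = [x1 y1, ..., xn y1, y1, ..., ym] *)
Definition thprod {X : Type} (op : X -> X -> X) (u v : Lp X) : Lp X :=
  (op (fst u) (fst v), map (fun z => op z (fst v)) (snd u) ++ fst v :: snd v).

(** Semigroups (possibly empty). *)
Record Sgp : Type := {
  sg_car :> Type;
  sg_op : sg_car -> sg_car -> sg_car;
  sg_assoc : forall a b c, sg_op (sg_op a b) c = sg_op a (sg_op b c)
}.

Record Coalg : Type := {
  co_sg : Sgp;
  co_act : sg_car co_sg -> Lp (sg_car co_sg);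
  co_hom : forall a b, co_act (sg_op co_sg a b)
                       = thprod (sg_op co_sg) (co_act a) (co_act b);
  co_coassoc : forall y, Ldelta (co_act y) = Lmap co_act (co_act y);
  co_counit : forall y, Leps (co_act y) = y
}.

Definition Ccar (A : Coalg) : Type := sg_car (co_sg A).

Definition is_coalg_hom (A B : Coalg) (f : Ccar A -> Ccar B) : Prop :=
  (forall a b, f (sg_op (co_sg A) a b) = sg_op (co_sg B) (f a) (f b)) /\
  (forall y, co_act B (f y) = Lmap f (co_act A y)).

Lemma Lcat_assoc (X : Type) (u v w : Lp X) :
  Lcat (Lcat u v) w = Lcat u (Lcat v w).
Proof.
  destruct u as [x l], v as [y m], w as [z n]; unfold Lcat; simpl.
  now rewrite <- app_assoc.
Qed.

Definition freeSgp (X : Type) : Sgp :=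
  {| sg_car := Lp X; sg_op := @Lcat X; sg_assoc := @Lcat_assoc X |}.

Lemma suffixes_app (X : Type) (l m : list X) (y : X) :
  suffixes (l ++ y :: m) =
  map (fun s => Lcat s (y, m)) (suffixes l) ++ (y, m) :: suffixes m.
Proof.
  induction l as [|a l IH]; simpl; auto.
  rewrite IH. reflexivity.
Qed.

Lemma Ldelta_hom (X : Type) (u v : Lp X) :
  Ldelta (Lcat u v) = thprod (@Lcat X) (Ldelta u) (Ldelta v).
Proof.
  destruct u as [x l], v as [y m]; unfold Ldelta, Lcat, thprod; simpl.
  rewrite suffixes_app. reflexivity.
Qed.

Lemma suffixes_suffixes (X : Type) (l : list X) :
  suffixes (suffixes l) = map Ldelta (suffixes l).
Proof.
  induction l as [|a l IH]; simpl; auto.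
  rewrite IH. reflexivity.
Qed.

Lemma Ldelta_coassoc (X : Type) (w : Lp X) :
  Ldelta (Ldelta w) = Lmap Ldelta (Ldelta w).
Proof.
  destruct w as [x l]; unfold Ldelta, Lmap; simpl.
  rewrite suffixes_suffixes. reflexivity.
Qed.

Lemma Ldelta_counit (X : Type) (w : Lp X) : Leps (Ldelta w) = w.
Proof. reflexivity. Qed.

Definition K (X : Type) : Coalg :=
  {| co_sg := freeSgp X;
     co_act := @Ldelta X;
     co_hom := @Ldelta_hom X;
     co_coassoc := @Ldelta_coassoc X;
     co_counit := @Ldelta_counit X |}.

Lemma suffixes_map (X Y : Type) (f : X -> Y) (l : list X) :
  suffixes (map f l) = map (Lmap f) (suffixes l).
Proof.
  induction l as [|a l IH]; simpl; auto.
  rewrite IH. reflexivity.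
Qed.

Lemma K_hom (X Y : Type) (f : X -> Y) :
  is_coalg_hom (K X) (K Y) (Lmap f).
Proof.
  split.
  - intros [x l] [y m]; unfold Lmap, Lcat; simpl. now rewrite map_app.
  - intros [x l]; change (Ldelta (Lmap f (x, l)) = Lmap (Lmap f) (Ldelta (x, l))).
    unfold Ldelta, Lmap; simpl. now rewrite suffixes_map.
Qed.

(** K : Set -> Sgp_{C^theta} is an equivalence of categories: there is a
    functor G : Sgp_{C^theta} -> Set and natural isomorphisms
    eta : Id ~= G K  and  epsilon : K G ~= Id. *)
Definition K_is_equivalence : Prop :=
  exists (G : Coalg -> Type)
         (Gm : forall (A B : Coalg) (f : Ccar A -> Ccar B),
                 is_coalg_hom A B f -> G A -> G B)
         (eta : forall X : Type, X -> G (K X))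
         (eta_inv : forall X : Type, G (K X) -> X)
         (ep : forall A : Coalg, Ccar (K (G A)) -> Ccar A)
         (ep_inv : forall A : Coalg, Ccar A -> Ccar (K (G A))),
    (forall A (f : Ccar A -> Ccar A) (p : is_coalg_hom A A f),
        (forall y, f y = y) -> forall z, Gm A A f p z = z) /\
    (forall A B C (f : Ccar A -> Ccar B) (g : Ccar B -> Ccar C)
            (h : Ccar A -> Ccar C)
            (p : is_coalg_hom A B f) (q : is_coalg_hom B C g)
            (r : is_coalg_hom A C h),
        (forall y, h y = g (f y)) ->
        forall z, Gm A C h r z = Gm B C g q (Gm A B f p z)) /\
    (forall X (x : X), eta_inv X (eta X x) = x) /\
    (forall X (z : G (K X)), eta X (eta_inv X z) = z) /\
    (forall X Y (f : X -> Y) (x : X),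
        eta Y (f x) = Gm (K X) (K Y) (Lmap f) (K_hom f) (eta X x)) /\
    (forall A, is_coalg_hom (K (G A)) A (ep A)) /\
    (forall A, is_coalg_hom A (K (G A)) (ep_inv A)) /\
    (forall A (y : Ccar A), ep A (ep_inv A y) = y) /\
    (forall A (w : Ccar (K (G A))), ep_inv A (ep A w) = w) /\
    (forall A B (h : Ccar A -> Ccar B) (p : is_coalg_hom A B h)
            (w : Ccar (K (G A))),
        h (ep A w) = ep B (Lmap (Gm A B h p) w)).

(* Main.v *)
Require Import Defs.
From Stdlib Require Import List Bool Eqdep_dec.
Import ListNotations.

Fixpoint good (l : list bool) : bool :=
  match l with
  | [] => true
  | x :: l' => (if x then match l' with false :: _ => true | _ => false end else true) && good l'
  end.

Definition goodp (w : Lp bool) : bool := good (fst w :: snd w).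

Lemma good_app (l1 l2 : list bool) : good l1 = true -> good l2 = true -> l2 <> [] ->
  good (l1 ++ l2) = true.
Proof.
  induction l1 as [|x l1 IH]; simpl; auto.
  intros H1 H2 Hn. apply andb_true_iff in H1 as [Ha Hb].
  apply andb_true_iff; split; [|apply IH; auto].
  destruct x; auto. destruct l1 as [|y l1]; [discriminate|]. exact Ha.
Qed.

Definition S := { w : Lp bool | goodp w = true }.

Lemma S_eq (a b : S) : proj1_sig a = proj1_sig b -> a = b.
Proof.
  destruct a as [a pa], b as [b pb]; simpl; intros ->.
  f_equal. apply UIP_dec, bool_dec.
Qed.

Lemma goodp_cat (u v : Lp bool) : goodp u = true -> goodp v = true -> goodp (Lcat u v) = true.
Proof.
  destruct u as [x l], v as [y m]; unfold goodp, Lcat; simpl; intros Hu Hv.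
  change (good ((x :: l) ++ y :: m) = true). apply good_app; auto. discriminate.
Qed.

Definition Sop (a b : S) : S :=
  exist _ (Lcat (proj1_sig a) (proj1_sig b)) (goodp_cat _ _ (proj2_sig a) (proj2_sig b)).

Lemma Sop_assoc a b c : Sop (Sop a b) c = Sop a (Sop b c).
Proof. apply S_eq; simpl; apply Lcat_assoc. Qed.

Definition Ssg : Sgp := {| sg_car := S; sg_op := Sop; sg_assoc := Sop_assoc |}.

Definition bS : S := exist _ (false, []) eq_refl.

Definition lift (u : Lp bool) : S :=
  match bool_dec (goodp u) true with
  | left H => exist _ u H
  | right _ => bS
  end.

Lemma lift_val u : goodp u = true -> proj1_sig (lift u) = u.
Proof.
  unfold lift. destruct (bool_dec (goodp u) true); simpl; congruence.
Qed.

Lemma lift_sig (a : S) : lift (proj1_sig a) = a.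
Proof. apply S_eq, lift_val, proj2_sig. Qed.

Lemma suffixes_good l : good l = true -> Forall (fun s => goodp s = true) (suffixes l).
Proof.
  induction l as [|x l IH]; simpl; intros H; constructor.
  - exact H.
  - apply IH. apply andb_true_iff in H; tauto.
Qed.

Definition Sact (a : S) : Lp S := (a, map lift (suffixes (snd (proj1_sig a)))).

Lemma good_snd (w : Lp bool) : goodp w = true -> good (snd w) = true.
Proof. destruct w; unfold goodp; simpl; intros H; apply andb_true_iff in H; tauto. Qed.

Lemma Sact_hom a b : Sact (Sop a b) = thprod Sop (Sact a) (Sact b).
Proof.
  unfold Sact, thprod; simpl. f_equal.
  destruct a as [[x l] pa], b as [[y m] pb]; simpl.
  rewrite suffixes_app, map_app, map_map. simpl.
  f_equal.
  - rewrite map_map. apply map_ext_in. intros s Hs.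
    apply S_eq. simpl.
    pose proof (suffixes_good l (good_snd (x,l) pa)) as F.
    rewrite Forall_forall in F. specialize (F s Hs).
    rewrite lift_val; [rewrite lift_val; auto|].
    apply goodp_cat; auto.
  - f_equal. apply (lift_sig (exist _ (y, m) pb)).
Qed.

Lemma Sact_coassoc y : Ldelta (Sact y) = Lmap Sact (Sact y).
Proof.
  unfold Sact at 1 3, Ldelta, Lmap; simpl. f_equal.
  rewrite suffixes_map, suffixes_suffixes, !map_map.
  pose proof (suffixes_good _ (good_snd _ (proj2_sig y))) as F.
  rewrite Forall_forall in F.
  apply map_ext_in. intros s Hs. unfold Lmap, Ldelta, Sact; simpl.
  rewrite (lift_val s); auto.
Qed.

Lemma Sact_counit y : Leps (Sact y) = y.
Proof. reflexivity. Qed.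

Definition SA : Coalg :=
  {| co_sg := Ssg; co_act := Sact; co_hom := Sact_hom;
     co_coassoc := Sact_coassoc; co_counit := Sact_counit |}.

Definition yS : S := exist _ (true, [false]) eq_refl.

Theorem corollary5p4 : ~ K_is_equivalence.
Proof.
  intros [G [Gm [eta [eta_inv [ep [ep_inv H]]]]]].
  destruct H as [_ [_ [_ [_ [_ [Hep [Hepi [Hee _]]]]]]]].
  destruct (Hepi SA) as [_ Hact].
  specialize (Hact yS). simpl in Hact.
  destruct (ep_inv SA yS) as [z l] eqn:E.
  unfold Ldelta, Lmap, Sact in Hact; simpl in Hact.
  injection Hact as _ Hl.
  destruct l as [|z' [|z'' l]]; simpl in Hl; try discriminate.
  pose proof (Hee SA yS) as Hy. rewrite E in Hy.
  destruct (Hep SA) as [Hm _].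
  assert (Hy2 : yS = Sop (ep SA (z, [])) (ep SA (z', []))) by
    (rewrite <- Hy; exact (Hm (z, []) (z', []))).
  clear Hy; rename Hy2 into Hy.
  apply (f_equal (@proj1_sig _ _)) in Hy. simpl in Hy.
  destruct (ep SA (z, [])) as [[u1 u2] pu]. destruct (ep SA (z', [])) as [[v1 v2] pv].
  simpl in Hy. unfold Lcat in Hy; simpl in Hy.
  destruct u2; simpl in Hy; [|destruct u2; discriminate].
  injection Hy as Hu1 _ _. subst u1. unfold goodp in pu. simpl in pu. discriminate.
Qed.
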